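(* Let $\xi$ be a quadratic irrational real number and let $n\ge1$ be an integer. There is a constant $c>0$, depending only on $\xi$ and $n$, such that for every algebraic integer $\alpha$ of degree $n+1$ whose conjugates $\alpha_1,\dots,\alpha_{n+1}$ are all distinct from $\xi$, and for every ordering of these conjugates, one has \[ \max_{1\le i\le n} |\xi-\alpha_i| \ge c\, H(\alpha)^{-2/n}. \]
   Context: The height $H(\alpha)$ of an algebraic number $\alpha\in\mathbb{C}$ is the largest absolute value of the coefficients of its irreducible (minimal) polynomial in $\mathbb{Z}[T]$. The conjugates of $\alpha$ are the roots of this polynomial. An algebraic integer is a root of a monic polynomial in $\mathbb{Z}[T]$. *)

(* Defs.v *)
From HB Require Import structures.
From mathcomp Require Import all_boot all_order all_algebra all_field.
Set Implicit Arguments. Unset Strict Implicit. Unset Printing Implicit Defensive.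
Import Order.TTheory GRing.Theory Num.Theory.
Local Open Scope ring_scope.

Definition quadratic_irrational (xi : algC) : Prop :=
  xi \is Num.real /\
  exists q : {poly rat}, size q = 3%N /\ irreducible_poly q /\
                         root (map_poly ratr q) xi.

Definition height (p : {poly int}) : nat := (\max_(i < size p) absz (nth 0%R p i))%N.

(* p is the minimal polynomial (in Z[T]) of the algebraic integer alpha:
   p is monic, irreducible (over Q, equivalently over Z for monic p),
   and alpha is a root of p. *)
Definition min_poly_alg_int (alpha : algC) (p : {poly int}) : Prop :=
  p \is monic /\ irreducible_poly (map_poly intr p : {poly rat}) /\
  root (map_poly intr p) alpha.

(* Main.v *)
Require Import Defs.
From HB Require Import structures.
From mathcomp Require Import all_boot all_order all_algebra all_field.
Import Order.TTheory GRing.Theory Num.Theory.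
Local Open Scope ring_scope.
Set Implicit Arguments. Unset Strict Implicit.

Lemma ratr_den_int (r : rat) : ((denq r)%:~R * ratr r : algC) \is a Num.int.
Proof.
have -> : ((denq r)%:~R : algC) = ratr ((denq r)%:~R) by exact: (esym (ratr_int _ _)).
by rewrite -rmorphM [_ * r]mulrC -numqE rmorph_int rpred_int.
Qed.

Lemma int_den (m : int) (r : rat) : ((m * denq r)%:~R * ratr r : algC) \is a Num.int.
Proof. by rewrite intrM -mulrA rpredM ?rpred_int ?ratr_den_int. Qed.

Lemma quad_setup (xi : algC) : quadratic_irrational xi ->
  exists A S Pr : algC, [/\ A \is a Num.int, A != 0, A * S \is a Num.int &
     A * Pr \is a Num.int] /\ [/\ S \in Crat, Pr \in Crat,
     xi ^+ 2 = S * xi - Pr & xi \notin Crat].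
Proof.
case=> _ [q [sq [irrq rq]]].
have q2n0 : q`_2 != 0.
  have := lead_coef_eq0 q; rewrite lead_coefE sq /= => ->.
  by apply/eqP => q0; rewrite q0 size_poly0 in sq.
pose d0 := denq q`_0; pose d1 := denq q`_1; pose d2 := denq q`_2.
pose D : algC := (d0 * d1 * d2)%:~R.
pose c0 : algC := ratr q`_0.
pose c1 : algC := ratr q`_1.
pose c2 : algC := ratr q`_2.
have c2n0 : c2 != 0 by rewrite fmorph_eq0.
have Dn0 : D != 0.
  by rewrite (intr_eq0 algC) !mulf_neq0 ?denq_neq0.
pose A := D * c2.
have AK x : A * (x / c2) = D * x.
  by rewrite /A -mulrA (mulrC c2) divfK.
have eq : c0 + c1 * xi + c2 * xi ^+ 2 = 0.
  move: rq; rewrite /root horner_coef size_map_poly sq.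
  rewrite !big_ord_recl big_ord0 !coef_map /= expr0 expr1 mulr1 addr0 addrA.
  by move/eqP.
have c0C : c0 \in Crat by exact: Crat_rat.
have c1C : c1 \in Crat by exact: Crat_rat.
have c2C : c2 \in Crat by exact: Crat_rat.
exists A, (- (c1 / c2)), (c0 / c2).
split; split.
- by rewrite /A /D int_den.
- by rewrite mulf_neq0.
- rewrite mulrN AK rpredN /D.
  by rewrite mulrAC int_den.
- by rewrite AK /D -mulrA [d0 * _]mulrC; apply: int_den.
- by rewrite rpredN rpred_div.
- by rewrite rpred_div.
- apply: (mulfI c2n0).
  have h x : c2 * (x / c2) = x by rewrite mulrC divfK.
  rewrite mulrBr mulNr mulrN (mulrA c2 (c1/c2)) !h.
  move: eq; rewrite addrC => /eqP; rewrite addr_eq0 => /eqP ->.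
  by rewrite opprD addrC.
- apply/negP => /CratP [r xr].
  move: rq; rewrite xr fmorph_root => rq.
  have := irrq; case=> _ /(_ ('X - r%:P)).
  rewrite size_XsubC /= => /(_ isT).
  rewrite dvdp_XsubCl rq => /(_ isT) /eqp_size.
  by rewrite size_XsubC sq.
Qed.

Lemma pow_red (S Pr : algC) : S \in Crat -> Pr \in Crat -> forall i,
  exists u v, [/\ u \in Crat, v \in Crat &
    forall z, z ^+ 2 = S * z - Pr -> z ^+ i = u + v * z].
Proof.
move=> SC PC; elim=> [|i [u [v [uC vC IH]]]].
  by exists 1, 0; split=> // z _; rewrite mul0r addr0 expr0.
exists (- (v * Pr)), (u + v * S); split.
- by rewrite rpredN rpredM.
- by rewrite rpredD ?rpredM.
move=> z hz; rewrite exprSr IH // mulrDl -mulrA -expr2 hz mulrBr.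
by rewrite mulrDl mulrA addrA [RHS]addrC.
Qed.

Lemma sum_red (S Pr : algC) : S \in Crat -> Pr \in Crat -> forall m (c : nat -> algC),
  (forall i, c i \in Crat) ->
  exists u v, [/\ u \in Crat, v \in Crat &
    forall z, z ^+ 2 = S * z - Pr -> \sum_(i < m) c i * z ^+ i = u + v * z].
Proof.
move=> SC PC; elim=> [|m IH] c cC.
  by exists 0, 0; split=> // z _; rewrite big_ord0 mul0r addr0.
have [u [v [uC vC Hz]]] := IH c cC.
have [u' [v' [uC' vC' Hz']]] := @pow_red S Pr SC PC m.
exists (u + c m * u'), (v + c m * v'); split.
- by rewrite rpredD ?rpredM.
- by rewrite rpredD ?rpredM.
move=> z hz; rewrite big_ord_recr /= Hz // Hz' // mulrDr mulrDl mulrA.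
by rewrite addrACA.
Qed.

Lemma poly_red (S Pr : algC) (P : {poly algC}) : S \in Crat -> Pr \in Crat ->
  P \is a polyOver Crat ->
  exists u v, [/\ u \in Crat, v \in Crat &
    forall z, z ^+ 2 = S * z - Pr -> P.[z] = u + v * z].
Proof.
move=> SC PC /polyOverP PO.
have [u [v [uC vC H]]] := @sum_red S Pr SC PC (size P) (fun i => P`_i) PO.
by exists u, v; split=> // z hz; rewrite horner_coef H.
Qed.

Lemma max_ub (x y : algC) : 0 <= x -> 0 <= y ->
  [/\ x <= Num.max x y, y <= Num.max x y & 0 <= Num.max x y].
Proof.
move=> x0 y0; rewrite /Order.max; case: ifP => h.
  by split=> //; apply: ltW.
split=> //; rewrite real_leNgt ?h // ger0_real //.
Qed.

Lemma bigmax_ub n (F : 'I_n -> algC) : (forall i, 0 <= F i) ->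
  0 <= \big[Num.max/0]_(i < n) F i /\ forall i, F i <= \big[Num.max/0]_(i < n) F i.
Proof.
elim: n F => [|n IH] F F0.
  by rewrite big_ord0; split=> // [[]].
rewrite big_ord_recl /=.
have [M0 MF] := IH (fun i => F (lift ord0 i)) (fun i => F0 _).
have [h1 h2 h3] := @max_ub _ _ (F0 ord0) M0.
split=> // i.
case: (unliftP ord0 i) => [j ->|-> //].
exact: le_trans (MF j) h2.
Qed.

Lemma conj_quad (S Pr xi : algC) : xi ^+ 2 = S * xi - Pr ->
  (S - xi) ^+ 2 = S * (S - xi) - Pr.
Proof.
move=> h; rewrite expr2 mulrBl [xi * _]mulrBr -expr2 h [xi * S]mulrC.
by rewrite opprB addrAC subrr add0r.
Qed.

Lemma vieta (S Pr xi x : algC) : xi ^+ 2 = S * xi - Pr ->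
  (xi - x) * ((S - xi) - x) = x * x - S * x + Pr.
Proof.
move=> h.
have e1 : xi * (S - xi) = Pr.
  by rewrite mulrBr -expr2 h mulrC opprB addrC subrK.
rewrite mulrBl mulrBr e1 !mulrBr opprB (mulrC xi x) (mulrC x S).
by rewrite [RHS]addrC -addrA (addrCA (- (x * xi))) opprB addKr.
Qed.

Lemma Mform (S Pr xi u v : algC) : xi ^+ 2 = S * xi - Pr ->
  (u + v * xi) * (u + v * (S - xi)) = u * (u + v * S) + v * v * Pr.
Proof.
move=> h.
have e1 : xi * (S - xi) = Pr.
  by rewrite mulrBr -expr2 h mulrC opprB addrC subrK.
rewrite mulrDl [v * xi * _]mulrDr (mulrACA v xi v) e1 mulrDr (mulrBr v) mulrBr.
by rewrite (mulrC (v * xi) u) !addrA subrK mulrDr.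
Qed.

Lemma prod_const_seq (T : Type) (s : seq T) (a : algC) :
  \prod_(x <- s) a = a ^+ size s.
Proof. by elim: s => [|x s IH]; rewrite ?big_nil ?expr0 // big_cons IH exprS. Qed.

Unset Implicit Arguments.
Theorem mainTheorem7 (xi : algC) (n : nat) :
  quadratic_irrational xi -> (1 <= n)%N ->
  exists c : algC, 0 < c /\
    forall (alpha : algC) (p : {poly int}) (s : seq algC),
      min_poly_alg_int alpha p ->
      size p = n.+2 ->
      size s = n.+1 ->
      map_poly intr p = \prod_(x <- s) ('X - x%:P) ->
      all (fun x => x != xi) s ->
      c / n.-root ((height p)%:R ^+ 2) <= \big[Num.max/0]_(i < n) `|xi - s`_i|.
Proof.
move=> qxi n1.
have [A [S [Pr [[Aisint An0 ASint APint] [SC PC xi2 xiNC]]]]] := quad_setup qxi.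
have [xi' xi'E] : exists xi' : algC, xi' = S - xi by eexists.
have xi'2 : xi' ^+ 2 = S * xi' - Pr by rewrite xi'E; apply: conj_quad.
have [d dE] : exists d : algC, d = `|xi' - xi| by eexists.
have [K0 K0E] : exists K0 : algC, K0 = `|xi| + n%:R * (`|xi| + 1) by eexists.
have K00 : 0 <= K0 by rewrite K0E addr_ge0 ?mulr_ge0 ?addr_ge0 ?ler0n.
have d0 : 0 <= d by rewrite dE normr_ge0.
have A1 : 1 <= `|A| := norm_intr_ge1 Aisint An0.
have [G GE] : exists G : algC, G = `|A| * (d + 1) by eexists.
have [F FE] : exists F : algC, F = `|A| * ((K0 + 1) * (d + K0 + 1)) by eexists.
have [L LE] : exists L : algC, L = G ^+ n * F by eexists.
have G1 : 1 <= G by rewrite GE mulr_ege1 // lerDr.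
have F1 : 1 <= F.
  by rewrite FE !mulr_ege1 // ?lerDr // addr_ge0.
have L1 : 1 <= L by rewrite LE mulr_ege1 ?exprn_ege1.
have L0 : 0 < L by apply: lt_le_trans L1.
exists (L^-1); split; first by rewrite invr_gt0.
move=> alpha p s [pmon [pirr proot]] sp ss Pdef sne.
have [P PE] : exists P : {poly algC}, P = map_poly intr p by eexists.
rewrite -PE in Pdef.
have Pcoef k : P`_k = (p`_k)%:~R by rewrite PE coef_map.
have Pmon : P \is monic by rewrite Pdef monic_prod_XsubC.
have PCrat : P \is a polyOver Crat by apply/polyOverP => k; rewrite Pcoef rpred_int.
have PInt : P \is a polyOver Num.int by apply/polyOverP => k; rewrite Pcoef rpred_int.
have Pxi x : P.[x] = \prod_(y <- s) (x - y).
  by rewrite Pdef horner_prod; apply: eq_bigr => y _; rewrite hornerXsubC.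
have sAint x : x \in s -> x \in Aint.
  move=> xs; apply: (root_monic_Aint _ Pmon PInt).
  by rewrite Pdef root_prod_XsubC.
have [u [v [uC vC Huv]]] := poly_red SC PC PCrat.
have Pxin0 : P.[xi] != 0.
  rewrite Pxi prodf_seq_neq0; apply/allP => y ys /=.
  by rewrite subr_eq0 eq_sym; exact: (allP sne y ys).
have Pxi'n0 : P.[xi'] != 0.
  rewrite Huv //; apply/negP => /eqP h0.
  have [v0|vn0] := eqVneq v 0.
    move: h0; rewrite v0 mul0r addr0 => u0.
    by move: Pxin0; rewrite Huv // u0 v0 mul0r addr0 eqxx.
  have : xi' \in Crat.
    have -> : xi' = - u / v.
      apply: (mulfI vn0); rewrite [RHS]mulrC divfK //.
      by apply/eqP; rewrite -addr_eq0 addrC h0.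
    by rewrite rpred_div ?rpredN.
  move=> xi'C; move: xiNC; have -> : xi = S - xi' by rewrite xi'E opprB addrC subrK.
  by rewrite rpredB.
have [M ME] : exists M : algC, M = P.[xi] * P.[xi'] by eexists.
have MC : M \in Crat.
  rewrite ME !Huv // xi'E (Mform u v xi2).
  by rewrite rpredD ?rpredM ?rpredD ?rpredM.
have Mn0 : M != 0 by rewrite ME mulf_neq0.
have AC : A \in Crat by have [m ->] := intrP Aisint; rewrite rpred_int.
have [N NE] : exists N : algC, N = \prod_(x <- s) (A * ((xi - x) * (xi' - x))) by eexists.
have NM : N = A ^+ (size s) * M.
  by rewrite NE big_split /= prod_const_seq big_split /= -!Pxi ME.
have NC : N \in Crat by rewrite NM rpredM ?rpredX.
have NA : N \in Aint.
  rewrite NE big_seq rpred_prod // => x xs.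
  rewrite xi'E (vieta x xi2) mulrDr mulrBr !mulrA.
  have xA := sAint x xs.
  have AA := Aint_Cint Aisint; have ASA := Aint_Cint ASint; have APA := Aint_Cint APint.
  by apply: rpredD => //; apply: rpredB; apply: rpredM => //; exact: rpredM.
have Nint := Cint_rat_Aint NC NA.
have Nn0 : N != 0 by rewrite NM mulf_neq0 ?expf_neq0.
have N1 : 1 <= `|N| := norm_intr_ge1 Nint Nn0.
have NE2 : `|N| = \prod_(i < n.+1) (`|A| * (`|xi - s`_i| * `|xi' - s`_i|)).
  rewrite NE normr_prod (big_nth 0) ss big_mkord; apply: eq_bigr => i _.
  by rewrite !normrM.
rewrite big_ord_recr /= in NE2.
have [H HE] : exists H : algC, H = (height p)%:R by eexists.
rewrite -HE.
have ip : (n.+1 < size p)%N by rewrite sp.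
have inp : (n < size p)%N by rewrite sp ltnS leqnSn.
have H1 : 1 <= H.
  rewrite HE ler1n.
  have := @leq_bigmax _ (fun i : 'I_(size p) => absz p`_i) (Ordinal ip).
  have -> : p`_n.+1 = 1 by move/monicP: pmon; rewrite lead_coefE sp.
  by [].
have H0 : 0 < H by apply: lt_le_trans H1.
have coefH : `|P`_n| <= H.
  rewrite Pcoef -intr_norm -natr_absz HE ler_nat.
  exact: (@leq_bigmax _ (fun i : 'I_(size p) => absz p`_i) (Ordinal inp)).
have [dl0 dge] := @bigmax_ub n (fun i : 'I_n => `|xi - s`_i|) (fun i => normr_ge0 _).
have [δ δE] : exists δ : algC, δ = \big[Num.max/0]_(i < n) `|xi - s`_i| by eexists.
rewrite -δE in dl0 dge *.
have [r rE] : exists r : algC, r = n.-root (H ^+ 2) by eexists.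
rewrite -rE.
have rn : r ^+ n = H ^+ 2 by rewrite rE rootCK.
have r1 : 1 <= r by rewrite rE rootC_ge1 // exprn_ege1.
have r0 : 0 < r by apply: lt_le_trans r1.
have Linv1 : L^-1 <= 1 by rewrite invf_le1.
have Linv0 : 0 <= L^-1 by rewrite invr_ge0 ltW.
case: (real_leP (real1 _) (ger0_real dl0)) => [dg1|dl1].
  apply: le_trans dg1; rewrite ler_pdivrMr // mul1r.
  exact: le_trans Linv1 r1.
have dl1' : δ <= 1 by apply: ltW.
have t1 (i : 'I_n) : `|xi' - s`_i| <= d + 1.
  apply: le_trans (ler_distD xi _ _) _; rewrite -dE lerD2l.
  exact: le_trans (dge i) dl1'.
have t2 (i : 'I_n) : `|s`_i| <= `|xi| + 1.
  have := ler_distD xi 0 s`_i; rewrite !sub0r !normrN => h.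
  apply: le_trans h _; rewrite lerD2l.
  exact: le_trans (dge i) dl1'.
have sn : s`_n = - P`_n - \sum_(i < n) s`_i.
  have := @coefPn_prod_XsubC _ s; rewrite ss -Pdef => /(_ isT).
  rewrite (big_nth 0) ss big_mkord big_ord_recr /= => ->.
  by rewrite opprK addrAC subrr add0r.
have tn : `|xi - s`_n| <= (K0 + 1) * H.
  have e1 : `|xi - s`_n| <= `|xi| + (`|P`_n| + \sum_(i < n) `|s`_i|).
    rewrite sn -opprD opprK.
    apply: le_trans (ler_normD _ _) _; rewrite lerD2l.
    apply: le_trans (ler_normD _ _) _; rewrite lerD2l.
    exact: ler_norm_sum.
  have e2 : \sum_(i < n) `|s`_i| <= n%:R * (`|xi| + 1).
    apply: le_trans (ler_sum _ (fun i _ => t2 i)) _.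
    by rewrite sumr_const card_ord mulr_natl.
  apply: le_trans e1 _.
  apply: (@le_trans _ _ (H + K0)).
    by rewrite K0E (addrCA H) lerD2l; apply: lerD.
  rewrite mulrDl mul1r addrC lerD2r.
  by rewrite ler_peMr.
have tn' : `|xi' - s`_n| <= (d + K0 + 1) * H.
  apply: le_trans (ler_distD xi _ _) _; rewrite -dE.
  rewrite -addrA mulrDl; apply: lerD => //.
  by rewrite ler_peMr.
have A0 : 0 <= `|A| by apply: normr_ge0.
have P1 : \prod_(i < n) (`|A| * (`|xi - s`_i| * `|xi' - s`_i|)) <= (G * δ) ^+ n.
  have -> : (G * δ) ^+ n = \prod_(i < n) (G * δ).
    by rewrite prodr_const card_ord.
  apply: ler_prod => i _; rewrite mulr_ge0 ?mulr_ge0 //=.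
  rewrite GE -mulrA ler_pM ?mulr_ge0 // (mulrC (d + 1)) ler_pM //.
have P2 : `|A| * (`|xi - s`_n| * `|xi' - s`_n|) <= F * H ^+ 2.
  rewrite FE expr2 -mulrA (mulrACA (K0 + 1)).
  by apply: ler_pM; rewrite ?mulr_ge0 //; apply: ler_pM.
have key : 1 <= L * (δ ^+ n * H ^+ 2).
  apply: le_trans N1 _; rewrite NE2.
  apply: le_trans (ler_pM _ _ P1 P2) _.
  - by rewrite prodr_ge0 // => i _; rewrite !mulr_ge0.
  - by rewrite !mulr_ge0.
  by rewrite LE exprMn mulrACA.
have q0 : 0 <= L^-1 / r by rewrite divr_ge0 // ltW.
rewrite -(ler_pXn2r n1) ?nnegrE //.
rewrite exprMn (exprVn r) rn.
apply: (@le_trans _ _ (L^-1 * (H ^+ 2)^-1)).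
  apply: ler_wpM2r; first by rewrite invr_ge0 exprn_ge0 // ltW.
  exact: ler_iXnr.
rewrite ler_pdivrMr ?exprn_gt0 // -[L^-1]mulr1 ler_pdivrMl //.

Qed.
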